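(* Let $N\in\mathbb N$, $w_1,\dots,w_N\in\mathbb R^m$, $\omega(z)=\max_{i=1,\dots,N}\langle w_i,z\rangle$ for $z\in\mathbb R^m$, and $A\in\mathbb R^{m\times n}$. For $\lambda>0$ and $y\in\mathbb R^n$ let $h_\lambda(u)=\frac1{2\lambda}\|\lambda u-y\|^2-\frac1{2\lambda}\|y\|^2$ ($u\in\mathbb R^n$) and $\Psi_\lambda(v)=h_\lambda(A^\top v)+\omega^\star(v)$ ($v\in\mathbb R^m$). Then: (i) $\omega$ is globally $K_\omega$-Lipschitz continuous with $K_\omega=\max_{i}\|w_i\|$, and $\operatorname{dom}\omega^\star$ is bounded; (ii) there is a constant $\theta>0$ (a Hoffman constant depending only on $A^\top$ and the polytope $\operatorname{conv}\{w_1,\dots,w_N\}$, not on $\lambda$ or $y$) such that for every $\lambda>0$ and $y\in\mathbb R^n$: $v\mapsto h_\lambda(A^\top v)$ is convex and $\lambda\|A^\top A\|$-Lipschitz smooth, $\Psi_\lambda$ has a nonempty set $S$ of minimizers, and $\Psi_\lambda$ satisfies quadratic growth with constant $\kappa_\lambda=\lambda/\theta^2$; (iii) if $\lambda\ge\lambda_{\min}>0$, then $\kappa_\lambda\ge\lambda_{\min}/\theta^2$.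
   Context: $\omega^\star$ is the Fenchel conjugate of $\omega$. A proper closed convex $\Psi$ with nonempty minimizer set $S$ satisfies quadratic growth with constant $\kappa>0$ if $\Psi(v)\ge\min\Psi+\frac\kappa2\operatorname{dist}(v|S)^2$ for all $v$. A convex differentiable function $\phi$ is $\ell$-Lipschitz smooth if $\phi(u)-\phi(w)-\langle\nabla\phi(w),u-w\rangle\le\frac\ell2\|u-w\|^2$ for all $u,w$. *)

(* Defs.v *)
From HB Require Import structures.
From mathcomp Require Import all_boot all_order all_algebra.
From mathcomp Require Import all_classical all_reals all_analysis.
Set Implicit Arguments. Unset Strict Implicit. Unset Printing Implicit Defensive.
Import Order.TTheory GRing.Theory Num.Theory.
Import numFieldNormedType.Exports.
Local Open Scope classical_set_scope.
Local Open Scope ring_scope.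

Section Defs.
Variable R : realType.

Definition dotv (k : nat) (u v : 'rV[R]_k) : R := \sum_(i < k) u 0 i * v 0 i.
Definition enorm (k : nat) (u : 'rV[R]_k) : R := Num.sqrt (dotv u u).

(* omega(z) = max_{i=1..N} <w_i, z>  (meaningful for N >= 1; the seed of
   the iterated max is the first term of the family). *)
Definition omega (N m : nat) (w : 'I_N -> 'rV[R]_m) (z : 'rV[R]_m) : R :=
  \big[Num.max/head 0 [seq dotv (w i) z | i <- enum 'I_N]]_(i < N) dotv (w i) z.

Definition fconj (m : nat) (f : 'rV[R]_m -> R) (v : 'rV[R]_m) : \bar R :=
  ereal_sup [set ((dotv v z - f z)%:E) | z in [set: 'rV[R]_m]].

Definition edom (m : nat) (g : 'rV[R]_m -> \bar R) : set 'rV[R]_m :=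
  [set v | (g v < +oo)%E].

Definition ebounded_set (m : nat) (S : set 'rV[R]_m) : Prop :=
  exists M : R, forall v, S v -> enorm v <= M.

Definition opnorm (p q : nat) (M : 'M[R]_(p, q)) : R :=
  sup [set enorm (x *m M) | x in [set x : 'rV[R]_p | enorm x <= 1]].

Definition convex_fun (k : nat) (f : 'rV[R]_k -> R) : Prop :=
  forall (u v : 'rV[R]_k) (t : R), 0 <= t -> t <= 1 ->
    f (t *: u + (1 - t) *: v) <= t * f u + (1 - t) * f v.

(* phi differentiable and l-Lipschitz smooth; <grad phi(w), h> is 'd phi w h *)
Definition lip_smooth (k : nat) (phi : 'rV[R]_k -> R) (l : R) : Prop :=
  (forall w, differentiable phi w) /\
  forall u w : 'rV[R]_k,
    phi u - phi w - ('d phi w) (u - w) <= l / 2 * enorm (u - w) ^+ 2.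

Definition argmin (k : nat) (Psi : 'rV[R]_k -> \bar R) : set 'rV[R]_k :=
  [set s | forall v, (Psi s <= Psi v)%E].

Definition distset (k : nat) (v : 'rV[R]_k) (S : set 'rV[R]_k) : R :=
  inf [set enorm (v - s) | s in S].

Definition quad_growth (k : nat) (Psi : 'rV[R]_k -> \bar R) (kappa : R) : Prop :=
  (argmin Psi !=set0) /\
  forall v s, argmin Psi s ->
    (Psi s + (kappa / 2 * distset v (argmin Psi) ^+ 2)%:E <= Psi v)%E.

Definition hlam (n : nat) (lam : R) (y u : 'rV[R]_n) : R :=
  (2 * lam)^-1 * enorm (lam *: u - y) ^+ 2 - (2 * lam)^-1 * enorm y ^+ 2.

(* A^T v, written with row vectors as v *m A *)
Definition Atv (m n : nat) (A : 'M[R]_(m, n)) (v : 'rV[R]_m) : 'rV[R]_n := v *m A.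

Definition Psilam (N m n : nat) (w : 'I_N -> 'rV[R]_m) (A : 'M[R]_(m, n))
  (lam : R) (y : 'rV[R]_n) (v : 'rV[R]_m) : \bar R :=
  ((hlam lam y (Atv A v))%:E + fconj (omega w) v)%E.

End Defs.

(* Main.v *)
Require Import Defs.
From HB Require Import structures.
From mathcomp Require Import all_boot all_order all_algebra.
From mathcomp Require Import all_classical all_reals all_analysis.
From mathcomp Require Import ring lra.
Import Order.TTheory GRing.Theory Num.Theory.
Import numFieldNormedType.Exports.
Local Open Scope classical_set_scope.
Local Open Scope ring_scope.
Set Implicit Arguments. Unset Strict Implicit. Unset Printing Implicit Defensive.
Section Dot.
Variable R : realType.
Variable k : nat.
Implicit Types u v x : 'rV[R]_k.

Lemma dotvC u v : dotv u v = dotv v u.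
Proof. by apply: eq_bigr => i _; rewrite mulrC. Qed.
Lemma dotvDl u v x : dotv (u + v) x = dotv u x + dotv v x.
Proof. by rewrite /dotv -big_split; apply: eq_bigr => i _; rewrite !mxE mulrDl. Qed.
Lemma dotvDr u v x : dotv x (u + v) = dotv x u + dotv x v.
Proof. by rewrite dotvC dotvDl !(dotvC x). Qed.
Lemma dotvZl a u v : dotv (a *: u) v = a * dotv u v.
Proof. by rewrite /dotv mulr_sumr; apply: eq_bigr => i _; rewrite !mxE mulrA. Qed.
Lemma dotvZr a u v : dotv u (a *: v) = a * dotv u v.
Proof. by rewrite dotvC dotvZl dotvC. Qed.
Lemma dotvNl u v : dotv (- u) v = - dotv u v.
Proof. by rewrite -scaleN1r dotvZl mulN1r. Qed.
Lemma dotvNr u v : dotv u (- v) = - dotv u v.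
Proof. by rewrite dotvC dotvNl dotvC. Qed.
Lemma dotvBl u v x : dotv (u - v) x = dotv u x - dotv v x.
Proof. by rewrite dotvDl dotvNl. Qed.
Lemma dotvBr u v x : dotv x (u - v) = dotv x u - dotv x v.
Proof. by rewrite dotvDr dotvNr. Qed.
Lemma dotv0l u : dotv 0 u = 0.
Proof. by rewrite /dotv big1 // => i _; rewrite mxE mul0r. Qed.
Lemma dotv0r u : dotv u 0 = 0.
Proof. by rewrite dotvC dotv0l. Qed.
Lemma dotv_ge0 u : 0 <= dotv u u.
Proof. by apply: sumr_ge0 => i _; rewrite -expr2 sqr_ge0. Qed.
Lemma dotv_eq0 u : dotv u u = 0 -> u = 0.
Proof.
move=> /eqP; rewrite psumr_eq0; last by move=> i _; rewrite -expr2 sqr_ge0.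
move=> /allP H; apply/rowP => i; rewrite mxE.
have := H i (mem_index_enum i); rewrite implyTb -expr2 sqrf_eq0.
by move/eqP.
Qed.
Lemma enorm_sq u : enorm u ^+ 2 = dotv u u.
Proof. by rewrite /enorm sqr_sqrtr // dotv_ge0. Qed.
Lemma enorm_ge0 u : 0 <= enorm u.
Proof. exact: sqrtr_ge0. Qed.
Lemma enorm0 : enorm (0 : 'rV[R]_k) = 0.
Proof. by rewrite /enorm dotv0l sqrtr0. Qed.

Lemma CS2 u v : dotv u v ^+ 2 <= dotv u u * dotv v v.
Proof.
set a := dotv u u; set b := dotv u v; set c := dotv v v.
have ha : 0 <= a by apply: dotv_ge0.
have hc : 0 <= c by apply: dotv_ge0.
have h1 : 0 <= c * (a * c - b ^+ 2).
  have := dotv_ge0 (c *: u - b *: v).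
  rewrite !(dotvBl, dotvBr, dotvZl, dotvZr) (dotvC v u) -/a -/b -/c.
  by move=> h; nra.
have h2 : 0 <= a * (a * c - b ^+ 2).
  have := dotv_ge0 (b *: u - a *: v).
  rewrite !(dotvBl, dotvBr, dotvZl, dotvZr) (dotvC v u) -/a -/b -/c.
  by move=> h; nra.
have h3 : 0 <= a + c - 2 * b.
  have := dotv_ge0 (u - v).
  rewrite !(dotvBl, dotvBr) (dotvC v u) -/a -/b -/c.
  by move=> h; lra.
have h4 : 0 <= a + c + 2 * b.
  have := dotv_ge0 (u + v).
  rewrite !(dotvDl, dotvDr) (dotvC v u) -/a -/b -/c.
  by move=> h; lra.
case: (ltrgtP a 0) => [|ap|a0]; first by lra.
  by nra.
case: (ltrgtP c 0) => [|cp|c0]; first by lra.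
  by nra.
rewrite a0 c0 in h3 h4 *; nra.
Qed.

Lemma CS u v : dotv u v <= enorm u * enorm v.
Proof.
rewrite /enorm -sqrtrM ?dotv_ge0 //.
apply: le_trans (ler_norm _) _.
rewrite -(sqrtr_sqr (dotv u v)) ler_sqrt ?mulr_ge0 ?dotv_ge0 //.
exact: CS2.
Qed.
Lemma CSabs u v : `|dotv u v| <= enorm u * enorm v.
Proof.
rewrite /enorm -sqrtrM ?dotv_ge0 //.
rewrite -(sqrtr_sqr (dotv u v)) ler_sqrt ?mulr_ge0 ?dotv_ge0 //.
exact: CS2.
Qed.

Lemma enorm_sqD u v : enorm (u + v) ^+ 2 = enorm u ^+ 2 + 2 * dotv u v + enorm v ^+ 2.
Proof. rewrite !enorm_sq !(dotvDl, dotvDr) (dotvC v u); ring. Qed.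

Lemma enormD u v : enorm (u + v) <= enorm u + enorm v.
Proof.
have h0 := enorm_ge0 (u + v); have h1 := enorm_ge0 u; have h2 := enorm_ge0 v.
have := CS u v; have := enorm_sqD u v => e h.
have : enorm (u + v) ^+ 2 <= (enorm u + enorm v) ^+ 2 by rewrite e; nra.
by nra.
Qed.

Lemma enormZ a u : enorm (a *: u) = `|a| * enorm u.
Proof.
by rewrite /enorm dotvZl dotvZr mulrA sqrtrM ?sqr_ge0 // -expr2 sqrtr_sqr.
Qed.
Lemma enormN u : enorm (- u) = enorm u.
Proof. by rewrite -scaleN1r enormZ normrN normr1 mul1r. Qed.
Lemma enormB u v : enorm (u - v) = enorm (v - u).
Proof. by rewrite -enormN opprB. Qed.

Lemma coord_le_enorm u i : `|u 0 i| <= enorm u.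
Proof.
rewrite /enorm -(sqrtr_sqr (u 0 i)) ler_sqrt ?dotv_ge0 //.
rewrite /dotv (bigD1 i) //= -expr2 lerDl sumr_ge0 // => j _.
by rewrite -expr2 sqr_ge0.
Qed.

End Dot.

Section Mat.
Variable R : realType.

Lemma mulmx_coord a b (y : 'rV[R]_a) (B : 'M[R]_(a, b)) j :
  (y *m B) 0 j = dotv y (col j B)^T.
Proof. by rewrite mxE; apply: eq_bigr => i _; rewrite !mxE. Qed.

Lemma dotv_mulmx a b (d : 'rV[R]_a) (A : 'M[R]_(a, b)) (u : 'rV[R]_b) :
  dotv (d *m A) u = dotv d (u *m A^T).
Proof.
rewrite /dotv.
under eq_bigr do rewrite mxE mulr_suml.
rewrite exchange_big /=; apply: eq_bigr => i _.
rewrite mxE mulr_sumr; apply: eq_bigr => j _; rewrite !mxE; ring.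
Qed.

Lemma opbound a b (B : 'M[R]_(a, b)) :
  exists c, 0 <= c /\ forall y, enorm (y *m B) <= c * enorm y.
Proof.
pose S := \sum_(j < b) dotv (col j B)^T (col j B)^T.
have S0 : 0 <= S by apply: sumr_ge0 => j _; apply: dotv_ge0.
exists (Num.sqrt S); split; first exact: sqrtr_ge0.
move=> y; rewrite /enorm -sqrtrM ?dotv_ge0 // ler_sqrt ?mulr_ge0 ?dotv_ge0 //.
have -> : dotv (y *m B) (y *m B) = \sum_(j < b) (y *m B) 0 j ^+ 2.
  by apply: eq_bigr => j _; rewrite expr2.
rewrite /S mulr_suml; apply: ler_sum => j _.
rewrite mulmx_coord mulrC; exact: CS2.
Qed.

End Mat.
Section Conf.
Local Close Scope classical_set_scope.
Variable R : realType.
Variable I : finType.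
Implicit Types a z : I -> R.

Definition conf a z := forall i, 0 <= a i * z i /\ (z i = 0 -> a i = 0).
Definition betw a z := forall i, 0 <= a i * z i /\ a i * a i <= a i * z i.
Definition nsupp z : nat := #|[set i | z i != 0]|.
Definition subs z (s : R) a := fun i => z i - s * a i.

Lemma step z a : (forall i, z i = 0 -> a i = 0) -> (exists i, 0 < a i * z i) ->
  exists s, 0 < s /\ conf (fun i => z i - s * a i) z /\
    (nsupp (subs z s a) < nsupp z)%N /\
    (conf a z -> betw (fun i => s * a i) z /\ betw (fun i => z i - s * a i) z).
Proof.
move=> za [i0 Pi0].
pose P := [pred i | 0 < a i * z i].
have : P i0 by [].
move=> /(arg_minP (fun i => z i / a i)) [j Pj jmin].
rewrite inE in Pj.
set s := z j / a j.
have aj0 : a j != 0 by apply: contraTneq Pj => ->; rewrite mul0r ltxx.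
have sP : 0 < s.
  have e : s * (a j * a j) = a j * z j by rewrite /s; field.
  have : 0 < a j * a j by rewrite -expr2 exprn_even_gt0.
  nra.
have key : forall i, 0 < a i * z i -> exists q, z i = q * a i /\ s <= q.
  move=> i Pi; exists (z i / a i); split; last by apply: jmin; rewrite inE.
  have ai0 : a i != 0 by apply: contraTneq Pi => ->; rewrite mul0r ltxx.
  by rewrite divfK.
have conf1 : conf (fun i => z i - s * a i) z.
  move=> i; split; last by move=> zi; rewrite zi (za i zi) mulr0 subr0.
  case: (ltP 0 (a i * z i)) => [Pi|Pi].
    have [q [e sq]] := key i Pi.
    rewrite e in Pi *.
    have h : 0 < a i * a i * q by move: Pi; rewrite (_ : a i * (q * a i) = a i * a i * q) //; ring.
    have h2 : 0 <= a i * a i by rewrite -expr2 sqr_ge0.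
    nra.
  have h2 : 0 <= z i * z i by rewrite -expr2 sqr_ge0.
  nra.
exists s; split => //; split => //; split.
  rewrite /nsupp /subs; apply: (proper_card (A := [set i | z i - s * a i != 0])); apply/properP; split.
    apply/fintype.subsetP => i; rewrite !inE; apply: contra => /eqP zi.
    by rewrite zi (za i zi) mulr0 subr0.
  exists j; rewrite !inE.
    by apply: contraTneq Pj => ->; rewrite mulr0 ltxx.
  by rewrite /s divfK // subrr eqxx.
move=> ca.
suff H : forall i, 0 <= s * a i * (z i - s * a i).
  split => i; (split; [| have := H i; nra]).
    by have := (ca i).1; nra.
  exact: (conf1 i).1.
move=> i.
case: (ltP 0 (a i * z i)) => [Pi|Pi].
  have [q [e sq]] := key i Pi.
  rewrite e.
  have h2 : 0 <= a i * a i by rewrite -expr2 sqr_ge0.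
  nra.
have : a i * z i = 0 by have := (ca i).1; lra.
move=> /eqP; rewrite mulf_eq0 => /orP [/eqP ->|/eqP zi].
  by rewrite !mulr0 mul0r.
by rewrite zi (za i zi) !mulr0 mul0r.
Qed.

End Conf.

Lemma betw1P (R : realType) (x z : R) :
  (0 <= x * z /\ x * x <= x * z) <->
  ((0 <= z /\ 0 <= x /\ x <= z) \/ (z <= 0 /\ z <= x /\ x <= 0)).
Proof.
split.
  move=> [h1 h2]; case: (ltrgtP z 0) => [zn|zp|z0].
  - right; split; first lra.
    have : x <= 0 by nra.
    move=> xn; split => //; nra.
  - left; split; first lra.
    have : 0 <= x by nra.
    move=> xp; split => //; nra.
  - have : x * x <= 0 by rewrite z0 mulr0 in h2.
    move=> h; have : x = 0 by nra.
    move=> ->; left; lra.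
move=> [[h1 [h2 h3]]|[h1 [h2 h3]]]; split; nra.
Qed.

Section Hoff.
Local Close Scope classical_set_scope.
Variable R : realType.
Variables p k : nat.
Variable M : 'M[R]_(p, k).
Variable r : 'rV[R]_k.

Definition xpart (Z : option 'I_p -> R) : 'rV[R]_p := \row_i Z (Some i).
Definition inV (Z : option 'I_p -> R) := xpart Z *m M = Z None *: r.
Definition indepM (J : {set 'I_p}) :=
  forall al : 'rV[R]_p, (forall i, i \notin J -> al 0 i = 0) -> al *m M = 0 -> al = 0.
Definition suppx (Z : option 'I_p -> R) := [set i | Z (Some i) != 0].

Lemma conf_trans (E Z' Z : option 'I_p -> R) : conf E Z' -> conf Z' Z -> conf E Z.
Proof.
move=> h1 h2 i; have [a1 a2] := h1 i; have [b1 b2] := h2 i; split; last first.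
  by move=> /b2 /a2.
case: (eqVneq (Z' i) 0) => [/a2 ->|nz]; first by rewrite mul0r.
have : 0 < Z' i * Z' i by rewrite -expr2 exprn_even_gt0.
have : 0 <= (E i * Z' i) * (Z' i * Z i) by apply: mulr_ge0.
by move=> h3 h4; nra.
Qed.

Lemma conf_refl (Z : option 'I_p -> R) : conf Z Z.
Proof. by move=> i; split => //; rewrite -expr2 sqr_ge0. Qed.

Lemma inV_subs Z s a : inV Z -> inV a -> inV (subs Z s a).
Proof.
rewrite /inV => h1 h2.
have -> : xpart (subs Z s a) = xpart Z - s *: xpart a.
  by apply/rowP => i; rewrite !mxE.
by rewrite mulmxBl -scalemxAl h1 h2 /subs scalerA scalerBl.
Qed.

Lemma E2 n (Z : option 'I_p -> R) : (nsupp Z <= n)%N -> inV Z -> (exists i, Z i != 0) ->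
  exists E, [/\ inV E, (exists i, E i != 0), conf E Z & (E None = 0 \/ indepM (suppx E))].
Proof.
elim: n Z => [|n IH] Z hn hV [i0 hi0].
  have : (0 < nsupp Z)%N by rewrite /nsupp card_gt0; apply/set0Pn; exists i0; rewrite inE.
  by rewrite leqn0 in hn; rewrite (eqP hn).
case: (eqVneq (Z None) 0) => [zN|zN].
  by exists Z; split => //; [exists i0 | exact: conf_refl | left].
case: (boolp.pselect (indepM (suppx Z))) => hind.
  by exists Z; split => //; [exists i0 | exact: conf_refl | right].
have [al [hal1 hal2 hal3]] : exists al : 'rV[R]_p,
    [/\ (forall i, i \notin suppx Z -> al 0 i = 0), al *m M = 0 & al != 0].
  apply: boolp.contra_notP hind => H al h1 h2; apply: boolp.contra_notP H => nal.
  by exists al; split => //; apply/eqP.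
have [j hj] : exists j, al 0 j != 0.
  case: (boolp.pselect (exists j, al 0 j != 0)) => [//|H].
  exfalso; move/eqP: hal3; apply; apply/rowP => j.
  rewrite mxE; apply/eqP/negPn/negP => hne; apply: H; exists j; exact: hne.
have hZj : Z (Some j) != 0.
  by apply: contraNneq hj => e; apply/eqP/hal1; rewrite inE e eqxx.
pose c : R := if 0 < al 0 j * Z (Some j) then 1 else -1.
pose a : option 'I_p -> R := fun o => match o with Some i => c * al 0 i | None => 0 end.
have ha1 : forall i, Z i = 0 -> a i = 0.
  case=> [i|] //= zi; rewrite hal1 ?mulr0 // inE zi eqxx //.
have ha2 : exists i, 0 < a i * Z i.
  exists (Some j); rewrite /a /c.
  case: ifP => [h|/negbT h]; first by rewrite mul1r.
  have : al 0 j * Z (Some j) != 0 by rewrite mulf_neq0.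
  by rewrite -leNgt in h => h'; rewrite mulN1r mulNr oppr_gt0 lt_neqAle h' h.
have [s [s0 [hc [hns _]]]] := step ha1 ha2.
have hV' : inV (subs Z s a).
  apply: inV_subs => //; rewrite /inV scale0r.
  have -> : xpart a = c *: al by apply/rowP => i; rewrite !mxE.
  by rewrite -scalemxAl hal2 scaler0.
have hN : subs Z s a None != 0 by rewrite /subs /= mulr0 subr0.
have [E [E1 E2 E3 E4]] := IH (subs Z s a) (leq_trans hns hn) hV' (ex_intro _ None hN).
by exists E; split => //; apply: conf_trans E3 hc.
Qed.


Lemma betw_Some (a z : option 'I_p -> R) : betw a z ->
  betw (fun i => a (Some i)) (fun i => z (Some i)).
Proof. by move=> h i; apply: h. Qed.

Lemma betw_trans (a b c : 'I_p -> R) : betw a b -> betw b c -> betw a c.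
Proof.
move=> h1 h2 i; have /betw1P H1 := h1 i; have /betw1P H2 := h2 i; apply/betw1P.
lra.
Qed.

Lemma betw_add (a b c d z : 'I_p -> R) : betw a b -> betw c d -> betw b z -> betw d z ->
  (forall i, b i + d i = z i) -> betw (fun i => a i + c i) z.
Proof.
move=> h1 h2 h3 h4 e i; have /betw1P H1 := h1 i; have /betw1P H2 := h2 i.
have /betw1P H3 := h3 i; have /betw1P H4 := h4 i; have := e i => E.
apply/betw1P; lra.
Qed.

Lemma ML K (K0 : 0 <= K)
  (hK : forall J, indepM J -> forall x : 'rV[R]_p,
      (forall i, i \notin J -> x 0 i = 0) -> enorm x <= K * enorm (x *m M))
  n (Z : option 'I_p -> R) : (nsupp Z <= n)%N -> inV Z -> 0 < Z None ->
  exists d : 'rV[R]_p, [/\ betw (fun i => d 0 i) (fun i => Z (Some i)),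
     d *m M = Z None *: r & enorm d <= K * Z None * enorm r].
Proof.
have r0 := enorm_ge0 r.
elim: n Z => [|n IH] Z hn hV hZ.
  have : (0 < nsupp Z)%N.
    rewrite /nsupp card_gt0; apply/set0Pn; exists None; rewrite inE; exact: lt0r_neq0.
  by rewrite leqn0 in hn; rewrite (eqP hn).
have [E [E1 [i1 Ei1] E3 E4]] := E2 (leqnn _) hV (ex_intro _ None (lt0r_neq0 hZ)).
have ha1 : forall i, Z i = 0 -> E i = 0 by move=> i /((E3 i).2).
have ha2 : exists i, 0 < E i * Z i.
  exists i1; have [c1 c2] := E3 i1; rewrite lt_neqAle c1 andbT eq_sym mulf_neq0 //.
  by apply: contraNneq Ei1 => /c2 ->.
have [s [s0 [hc [hns hb]]]] := step ha1 ha2.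
have [hb1 hb2] := hb E3.
have hV' : inV (subs Z s E) by apply: inV_subs.
have EN : 0 <= E None.
  have := (E3 None).1; move=> h; nra.
have Z'N : 0 <= subs Z s E None by have := (hb2 None).1; rewrite /subs => h; nra.
have bd : forall t : R, 0 <= t -> indepM (suppx E) ->
    enorm (t *: xpart E) <= K * (t * E None) * enorm r.
  move=> t t0 hi; apply: le_trans (hK _ hi _ _) _.
    by move=> i; rewrite inE negbK !mxE => /eqP ->; rewrite mulr0.
  rewrite -scalemxAl E1 scalerA enormZ ger0_norm ?mulr_ge0 //; lra.
move: Z'N; rewrite le_eqVlt => /orP [/eqP Z'0|Z'p].
  have ENn : E None != 0.
    apply/eqP => e; move: Z'0; rewrite /subs e mulr0 subr0 => h; by move: hZ; rewrite -h ltxx.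
  have hi : indepM (suppx E) by case: E4 => // /eqP; rewrite (negbTE ENn).
  have ZN : Z None = s * E None by move: Z'0; rewrite /subs => h; lra.
  exists (s *: xpart E); split.
  - by move=> i; rewrite !mxE; apply: (betw_Some hb1).
  - by rewrite -scalemxAl E1 scalerA ZN.
  - by rewrite ZN; apply: bd => //; lra.
have [d' [d1 d2 d3]] := IH _ (leq_trans hns hn) hV' Z'p.
case: E4 => [EN0|hi].
  have ZN : subs Z s E None = Z None by rewrite /subs EN0 mulr0 subr0.
  exists d'; split; rewrite -?ZN //.
  by apply: betw_trans d1 (betw_Some hb2).
exists (s *: xpart E + d'); split.
- have -> : (fun i => (s *: xpart E + d') 0 i) = (fun i => s * E (Some i) + d' 0 i).
    by apply: boolp.funext => i; rewrite !mxE.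
  apply: (@betw_add (fun i => s * E (Some i)) (fun i => s * E (Some i)) (fun i => d' 0 i)
     (fun i => subs Z s E (Some i))).
  + by move=> i; split; [rewrite -expr2 sqr_ge0 | exact: lexx].
  + exact: d1.
  + exact: betw_Some hb1.
  + exact: betw_Some hb2.
  + by move=> i; rewrite /subs; ring.
- by rewrite mulmxDl -scalemxAl E1 d2 scalerA -scalerDl /subs; congr (_ *: _); ring.
- apply: le_trans (enormD _ _) _.
  have := bd s (ltW s0) hi; rewrite /subs in d3 *; move=> h; nra.
Qed.

End Hoff.


Section Bound.
Local Close Scope classical_set_scope.
Variable R : realType.
Variables p k : nat.
Variable M : 'M[R]_(p, k).

Lemma boundJ (J : {set 'I_p}) : exists c : R, 0 <= c /\ (indepM M J -> forall x : 'rV[R]_p,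
      (forall i, i \notin J -> x 0 i = 0) -> enorm x <= c * enorm (x *m M)).
Proof.
case: (boolp.pselect (indepM M J)) => hi; last by exists 0; split.
pose D : 'M[R]_p := diag_mx (\row_i ((i \in J)%:R)).
have xD : forall x : 'rV[R]_p, (forall i, i \notin J -> x 0 i = 0) -> x *m D = x.
  move=> x hx; apply/rowP => i; rewrite mul_mx_diag !mxE.
  by case: (boolP (i \in J)) => [_|/hx ->]; rewrite ?mulr1 ?mulr0.
pose Y := row_mx (D *m M) (1%:M - D).
have fY : row_free Y.
  apply: inj_row_free => v; rewrite mul_mx_row => /eqP; rewrite -row_mx0 => /eqP.
  move=> /eq_row_mx [h1 h2].
  have h3 : v *m D = v by move: h2; rewrite mulmxBr mulmx1 => /eqP; rewrite subr_eq0 => /eqP.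
  have : v *m D = 0.
    apply: hi; last by rewrite -mulmxA.
    by move=> i hiJ; rewrite mul_mx_diag !mxE (negbTE hiJ) mulr0.
  by rewrite h3.
have [B hB] := row_freeP fY.
have [c [c0 hc]] := opbound (usubmx B).
exists c; split => // _ x hx.
have ex : x = (x *m M) *m usubmx B.
  have : x *m Y *m B = x by rewrite -mulmxA hB mulmx1.
  rewrite mul_mx_row mulmxA xD // mulmxBr mulmx1 xD // subrr.
  rewrite -[B in _ *m B]vsubmxK mul_row_col mul0mx addr0 => e.
  by rewrite {1}e.
rewrite {1}ex; exact: hc.
Qed.

Lemma boundK : exists K : R, 0 <= K /\ forall J, indepM M J -> forall x : 'rV[R]_p,
      (forall i, i \notin J -> x 0 i = 0) -> enorm x <= K * enorm (x *m M).
Proof.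
have [f hf] := boolp.choice boundJ.
exists (\sum_J f J); split.
  by apply: sumr_ge0 => J _; case: (hf J).
move=> J hJ x hx; apply: le_trans ((hf J).2 hJ x hx) _.
apply: ler_wpM2r; first exact: enorm_ge0.
rewrite (bigD1 J) //= lerDl; apply: sumr_ge0 => J' _; by case: (hf J').
Qed.

Lemma hoffman : exists K : R, 0 <= K /\ forall d : 'rV[R]_p, exists e : 'rV[R]_p,
   [/\ betw (fun i => e 0 i) (fun i => d 0 i), e *m M = d *m M & enorm e <= K * enorm (d *m M)].
Proof.
have [K [K0 hK]] := boundK.
exists K; split => // d.
pose Z : option 'I_p -> R := fun o => match o with Some i => d 0 i | None => 1 end.
have hV : inV M (d *m M) Z.
  rewrite /inV scale1r; congr (_ *m _); by apply/rowP => i; rewrite mxE.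
have [e [e1 e2 e3]] := ML K0 hK (leqnn _) hV ltr01.
by exists e; split; rewrite ?scale1r ?mulr1 in e2 e3 *.
Qed.

End Bound.

Section DF.
Variable R : realType.
Variable a : nat.
Definition DF (f : 'rV[R]_a -> R) := forall x, differentiable f x.

Lemma DF_ext f g : (forall x, f x = g x) -> DF f -> DF g.
Proof. by move=> e; rewrite (_ : g = f) //; apply: boolp.funext => x; rewrite e. Qed.
Lemma DF_cst c : DF (fun _ => c).
Proof. by move=> x; apply: differentiable_cst. Qed.
Lemma DF_coord i : DF (fun u => u 0 i).
Proof. by move=> x; apply: differentiable_coord. Qed.
Lemma DF_add f g : DF f -> DF g -> DF (fun u => f u + g u).
Proof. by move=> hf hg x; apply: differentiableD. Qed.
Lemma DF_mul f g : DF f -> DF g -> DF (fun u => f u * g u).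
Proof. by move=> hf hg x; apply: differentiableM. Qed.
Lemma DF_sum b (f : 'I_b -> 'rV[R]_a -> R) : (forall i, DF (f i)) -> DF (fun u => \sum_(i < b) f i u).
Proof.
move=> h x; have := differentiable_sum (fun i => h i x).
by rewrite fct_sumE.
Qed.
Lemma DF_lin b (B : 'M[R]_(a, b)) (c : 'rV[R]_b) j : DF (fun u => (u *m B + c) 0 j).
Proof.
apply: (@DF_ext (fun u => \sum_(i < a) u 0 i * B i j + c 0 j)).
  by move=> u; rewrite !mxE.
apply: DF_add; last exact: DF_cst.
by apply: DF_sum => i; apply: DF_mul; [apply: DF_coord | apply: DF_cst].
Qed.
Lemma DF_quad b (B : 'M[R]_(a, b)) (c : 'rV[R]_b) :
  DF (fun u => dotv (u *m B + c) (u *m B + c)).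
Proof. by apply: DF_sum => j; apply: DF_mul; apply: DF_lin. Qed.
End DF.

Section Simplex.
Variable R : realType.
Variable N : nat.
Definition simplex (l : 'rV[R]_N) := (forall i, 0 <= l 0 i) /\ \sum_(i < N) l 0 i = 1.

Lemma closed_pre (f : 'rV[R]_N -> R) (D : set R) : DF f -> closed D -> closed (f @^-1` D).
Proof.
move=> hf cD; apply: preimage_closed => // x _.
exact: differentiable_continuous (hf x).
Qed.

Lemma simplex_closed : closed [set l | simplex l].
Proof.
have -> : [set l | simplex l] =
   (\bigcap_(i in [set: 'I_N]) ((fun l : 'rV[R]_N => l 0 i) @^-1` [set x | 0 <= x]))
   `&` ((fun l : 'rV[R]_N => \sum_(i < N) l 0 i) @^-1` [set x | x <= 1])
   `&` ((fun l : 'rV[R]_N => \sum_(i < N) l 0 i) @^-1` [set x | 1 <= x]).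
  apply/seteqP; split => l /=.
    move=> [h1 h2]; rewrite h2; split; [split => // | by []].
    by move=> i _; apply: h1.
  move=> [[h1 h2] h3]; split; first by move=> i; apply: h1.
  by apply/le_anti/andP.
apply: closedI; first apply: closedI.
- apply: closed_bigI => i _; apply: closed_pre; [exact: DF_coord | exact: closed_ge].
- apply: closed_pre; [by apply: DF_sum => i; apply: DF_coord | exact: closed_le].
- apply: closed_pre; [by apply: DF_sum => i; apply: DF_coord | exact: closed_ge].
Qed.

Lemma simplex_coord_le1 l i : simplex l -> l 0 i <= 1.
Proof.
move=> [h1 h2]; rewrite -h2 (bigD1 i) //= lerDl; apply: sumr_ge0 => j _; exact: h1.
Qed.

Lemma simplex_bounded : bounded_set [set l | simplex l].
Proof.
exists 1; split => // M M1 l hl /=.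
change (mx_norm l <= M); rewrite mx_normrE; apply: bigmax_le; first lra.
move=> [i j] _ /=; rewrite ger0_norm; last first.
  by rewrite (ord1 i); case: hl => + _; apply.
by rewrite (ord1 i); have := simplex_coord_le1 j hl; lra.
Qed.

Lemma exists_min (f : 'rV[R]_N -> R) : (0 < N)%N -> DF f ->
  exists l, simplex l /\ forall l', simplex l' -> f l <= f l'.
Proof.
move=> HN hf.
have ne : [set l | simplex l] !=set0.
  exists (\row_i (i == Ordinal HN)%:R); split => [i|]; rewrite ?mxE ?ler0n //.
  rewrite (bigD1 (Ordinal HN)) //= mxE eqxx big1 ?addr0 // => i /negbTE.
  by rewrite mxE => ->.
have cp := bounded_closed_compact simplex_bounded simplex_closed.
have cf : {within [set l | simplex l], continuous f}.
  apply: continuous_subspaceT => x; exact: differentiable_continuous (hf x).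
have [l hl hmin] := EVT_min_rV ne cp cf.
exists l; split; first by move: hl; rewrite inE.
by move=> l' hl'; apply: hmin; rewrite inE.
Qed.
End Simplex.

Section Omega.
Variable R : realType.
Variables N m : nat.
Variable w : 'I_N -> 'rV[R]_m.
Hypothesis HN : (0 < N)%N.

Lemma omega_ge z i : dotv (w i) z <= omega w z.
Proof. by rewrite /omega; apply: le_bigmax. Qed.

Lemma omega_att z : exists i, omega w z = dotv (w i) z.
Proof.
rewrite /omega; set s0 := head _ _.
have hs0 : exists i, s0 = dotv (w i) z.
  rewrite /s0; case E: (enum 'I_N) => [|i s] /=; last by exists i.
  exfalso; have := size_enum_ord N; rewrite E /= => e; have := HN; by rewrite -e.
elim/big_rec: _ => // i x _ [j ->].
rewrite maxEle; case: ifP => _; by [exists j | exists i].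
Qed.

Lemma omega0 : omega w 0 = 0.
Proof. by have [i ->] := omega_att 0; rewrite dotv0r. Qed.

Definition Kw := \big[Num.max/0]_(i < N) enorm (w i).

Lemma Kw_ge i : enorm (w i) <= Kw.
Proof. by apply: le_bigmax. Qed.

Lemma Kw_ge0 : 0 <= Kw.
Proof. by apply: le_trans (Kw_ge (Ordinal HN)); apply: enorm_ge0. Qed.

Lemma omega_lip1 z z' : omega w z - omega w z' <= Kw * enorm (z - z').
Proof.
have [i ->] := omega_att z.
apply: le_trans (_ : dotv (w i) z - dotv (w i) z' <= _).
  by rewrite lerD2l lerN2; apply: omega_ge.
rewrite -dotvBr; apply: le_trans (CS _ _) _.
by apply: ler_wpM2r; [apply: enorm_ge0 | apply: Kw_ge].
Qed.

Lemma omega_lip z z' : `|omega w z - omega w z'| <= Kw * enorm (z - z').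
Proof.
rewrite ler_norml omega_lip1 andbT lerNl opprB enormB; apply: omega_lip1.
Qed.

Lemma omega_le z : omega w z <= Kw * enorm z.
Proof. by have := omega_lip1 z 0; rewrite omega0 !subr0. Qed.

Definition Wm : 'M[R]_(N, m) := \matrix_(i, j) w i 0 j.

Lemma dotv_Wm (l : 'rV[R]_N) z : dotv (l *m Wm) z = \sum_(i < N) l 0 i * dotv (w i) z.
Proof.
rewrite dotv_mulmx; apply: eq_bigr => i _; congr (_ * _).
by rewrite mxE; apply: eq_bigr => j _; rewrite !mxE mulrC.
Qed.

Definition inC v := exists l, simplex l /\ v = l *m Wm.

Lemma w_inC i : inC (w i).
Proof.
exists (delta_mx 0 i); split; last by rewrite -rowE; apply/rowP => j; rewrite !mxE.
split => [j|]; first by rewrite mxE ler0n.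
rewrite (bigD1 i) //= mxE !eqxx /= big1 ?addr0 // => j /negbTE hj.
by rewrite mxE hj andbF.
Qed.

Lemma inC_conv u v t : inC u -> inC v -> 0 <= t -> t <= 1 -> inC (t *: u + (1 - t) *: v).
Proof.
move=> [l1 [[h1 s1] ->]] [l2 [[h2 s2] ->]] t0 t1.
exists (t *: l1 + (1 - t) *: l2); split; last by rewrite mulmxDl -!scalemxAl.
split => [j|]; first by rewrite !mxE addr_ge0 // mulr_ge0 // ?h1 ?h2 //; lra.
rewrite (eq_bigr (fun i => t * l1 0 i + (1 - t) * l2 0 i)); last by move=> i _; rewrite !mxE.
by rewrite big_split /= -!mulr_sumr s1 s2; ring.
Qed.

Local Open Scope ereal_scope.

Lemma fconj_ge v z : (dotv v z - omega w z)%:E <= fconj (omega w) v.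
Proof. by apply: ereal_sup_ubound; exists z. Qed.

Lemma fconj_le v (c : R) : (forall z, (dotv v z - omega w z <= c)%R) -> fconj (omega w) v <= c%:E.
Proof. by move=> h; apply: ge_ereal_sup => _ [z _ <-]; rewrite lee_fin. Qed.

Lemma fconj_ge0 v : 0 <= fconj (omega w) v.
Proof. by have := fconj_ge v 0; rewrite dotv0r omega0 subr0. Qed.

Lemma fconj_fin v : fconj (omega w) v < +oo ->
  exists c : R, forall z, (dotv v z - omega w z <= c)%R.
Proof.
move=> h; exists (fine (fconj (omega w) v)) => z.
rewrite -lee_fin fineK ?fconj_ge // ge0_fin_numE //; exact: fconj_ge0.
Qed.

Lemma fconj_inC v : inC v -> fconj (omega w) v = 0.
Proof.
move=> hv; apply/le_anti/andP; split; last exact: fconj_ge0.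
apply: fconj_le => z; rewrite subr_le0.
case: hv => l [[h1 s1] ->]; rewrite dotv_Wm.
apply: le_trans (_ : (\sum_(i < N) l 0 i * omega w z <= _)%R).
  by apply: ler_sum => i _; apply: ler_wpM2l; [apply: h1 | apply: omega_ge].
by rewrite -mulr_suml s1 mul1r.
Qed.

Lemma fconj_bounded v : fconj (omega w) v < +oo -> (enorm v <= Kw)%R.
Proof.
move=> /fconj_fin [c hc].
have c0 : (0 <= c)%R by have := hc 0%R; rewrite dotv0r omega0 subr0.
rewrite leNgt; apply/negP => hlt.
have Kp := Kw_ge0.
set q := (enorm v * (enorm v - Kw))%R.
have qp : (0 < q)%R by rewrite /q mulr_gt0 //; lra.
pose t := ((c + 1) / q)%R.
have t0 : (0 <= t)%R by rewrite /t divr_ge0 //; lra.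
have := hc (t *: v); rewrite dotvZr -enorm_sq.
have := omega_le (t *: v); rewrite enormZ ger0_norm //.
have : (t * q = c + 1)%R by rewrite /t divfK //; apply: lt0r_neq0.
rewrite /q => e h1 h2; nra.
Qed.

End Omega.

Lemma small_le0 (R : realType) (a b : R) : 0 <= b ->
  (forall t, 0 < t -> t <= 1 -> a <= t * b) -> a <= 0.
Proof.
move=> b0 h; rewrite leNgt; apply/negP => ap.
have ab : 0 < a + b by lra.
pose t := a / (a + b).
have e : t * (a + b) = a by rewrite /t divfK //; apply: lt0r_neq0.
have t0 : 0 < t by rewrite /t divr_gt0.
have t1 : t <= 1 by rewrite /t ler_pdivrMr // mul1r; lra.
have := h t t0 t1; nra.
Qed.

Lemma dotv_sqD (R : realType) k (a b : 'rV[R]_k) t :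
  dotv (a + t *: b) (a + t *: b) = dotv a a + 2 * t * dotv a b + t ^+ 2 * dotv b b.
Proof. rewrite !(dotvDl, dotvDr, dotvZl, dotvZr) (dotvC b a); ring. Qed.

Section Sep.
Variable R : realType.
Variables N m : nat.
Variable w : 'I_N -> 'rV[R]_m.
Hypothesis HN : (0 < N)%N.

Lemma exists_minC (n' : nat) (c : 'rV[R]_n') (B : 'M[R]_(m, n')) :
  exists p, inC w p /\ forall u, inC w u -> dotv (p *m B + c) (p *m B + c) <= dotv (u *m B + c) (u *m B + c).
Proof.
have [l [hl hmin]] := exists_min HN (DF_quad (Wm w *m B) c).
exists (l *m Wm w); split; first by exists l.
move=> u [l' [hl' ->]]; rewrite -!mulmxA; exact: hmin.
Qed.

Lemma sep v : (fconj (omega w) v < +oo)%E -> inC w v.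
Proof.
move=> hf; have [c hc] := fconj_fin HN hf.
have [p [hp hmin]] := exists_minC (- v) (1%:M).
have var : forall u, inC w u -> dotv (v - p) (u - p) <= 0.
  move=> u hu; apply: (@small_le0 _ _ (dotv (u - p) (u - p) / 2)).
    by apply: divr_ge0 => //; apply: dotv_ge0.
  move=> t t0 t1.
  have := hmin _ (inC_conv hu hp (ltW t0) t1); rewrite !mulmx1.
  have -> : t *: u + (1 - t) *: p - v = (p - v) + t *: (u - p).
    by apply/rowP => i; rewrite !mxE; ring.
  rewrite dotv_sqD.
  have -> : dotv (p - v) (u - p) = - dotv (v - p) (u - p) by rewrite -dotvNl opprB.
  move=> h; have := dotv_ge0 (u - p); nra.
case: (boolp.pselect (inC w v)) => // hv; exfalso.
set z := v - p.
have zn : z != 0.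
  apply/eqP => e; apply: hv; move: e; rewrite /z => /eqP; rewrite subr_eq0 => /eqP ->.
  exact: hp.
have zz : 0 < dotv z z.
  rewrite lt_neqAle dotv_ge0 andbT eq_sym; apply: contraNneq zn => e.
  by apply/eqP/dotv_eq0.
have hw : forall i, dotv (w i) z <= dotv p z.
  move=> i; have := var _ (w_inC w i); rewrite dotvBr dotvC (dotvC z p); lra.
pose t := (c + 1) / dotv z z.
have c0 : 0 <= c by have := hc 0%R; rewrite dotv0r omega0 // subr0.
have t0 : 0 <= t by rewrite /t divr_ge0 //; lra.
have e : t * dotv z z = c + 1 by rewrite /t divfK //; apply: lt0r_neq0.
have := hc (t *: z); have [j ->] := omega_att w HN (t *: z).
rewrite !dotvZr.
have := hw j; have : dotv v z - dotv p z = dotv z z by rewrite -dotvBl.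
move=> e2 h1 h2; clear -e e2 h1 h2 t0 c0 zz; nra.
Qed.

End Sep.

Lemma derive_quad (R : realType) a (f : 'rV[R]_a -> R) (x h : 'rV[R]_a) (L q : R) :
  (forall t, f (t *: h + x) = f x + t * L + t ^+ 2 * q) -> derive f x h = L.
Proof.
move=> hf; rewrite /derive; apply: cvg_lim => //.
have e : {near 0^', (fun t : R => L + t * q) =1
    (fun t => t^-1 *: ((f \o shift x) (t *: h) - f x))}.
  near=> t; have t0 : t != 0 by near: t; exact: nbhs_dnbhs_neq.
  rewrite /= /shift hf; rewrite /GRing.scale /=.
  by field.
apply: cvg_trans (near_eq_cvg e) _.
apply: cvg_within_filter.
have H : ((cst L) + (fun t : R => t * q)) @ (nbhs (0:R)) --> L + 0 * q.
  apply: cvgD; first exact: cvg_cst.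
  by apply: cvgMr_tmp; apply: cvg_id.
rewrite mul0r addr0 in H; exact: H.
Unshelve. all: by end_near.
Qed.

Section FH.
Variable R : realType.
Variables m n : nat.
Variable A : 'M[R]_(m, n).
Variable lam : R.
Variable y : 'rV[R]_n.
Hypothesis lam0 : 0 < lam.

Definition Fh (v : 'rV[R]_m) := hlam lam y (Atv A v).

Lemma Fh_quad v d : Fh (v + d) =
  Fh v + dotv (lam *: (v *m A) - y) (d *m A) + lam / 2 * dotv (d *m A) (d *m A).
Proof.
rewrite /Fh /hlam /Atv mulmxDl scalerDr.
have -> : lam *: (v *m A) + lam *: (d *m A) - y = (lam *: (v *m A) - y) + lam *: (d *m A).
  by apply/rowP => i; rewrite !mxE; ring.
rewrite !enorm_sq dotv_sqD.
have ln : lam != 0 by apply: lt0r_neq0.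
by field.
Qed.

Lemma Fh_quadZ v e c : Fh (v + c *: e) =
  Fh v + c * dotv (lam *: (v *m A) - y) (e *m A) + c ^+ 2 * (lam / 2 * dotv (e *m A) (e *m A)).
Proof.
rewrite Fh_quad -scalemxAl dotvZr dotvZl dotvZr; ring.
Qed.

Lemma Fh_DF : DF Fh.
Proof.
apply: (DF_ext (f := fun v => (2 * lam)^-1 * dotv (v *m (lam *: A) + (- y)) (v *m (lam *: A) + (- y))
   + (- ((2 * lam)^-1 * enorm y ^+ 2)))).
  by move=> v; rewrite /Fh /hlam /Atv !enorm_sq scalemxAr.
apply: DF_add; last exact: DF_cst.
apply: DF_mul; first exact: DF_cst.
exact: DF_quad.
Qed.

Lemma Fh_diff w0 h : 'd Fh w0 h = dotv (lam *: (w0 *m A) - y) (h *m A).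
Proof.
rewrite -deriveE; last exact: Fh_DF.
apply: (@derive_quad _ _ _ _ _ _ (lam / 2 * dotv (h *m A) (h *m A))) => t.
by rewrite addrC Fh_quadZ; ring.
Qed.

Lemma Fh_convex : convex_fun Fh.
Proof.
move=> u v t t0 t1.
set p := t *: u + (1 - t) *: v.
have eu : u = p + (1 - t) *: (u - v) by apply/rowP => i; rewrite !mxE; ring.
have ev : v = p + (- t) *: (u - v) by apply/rowP => i; rewrite !mxE; ring.
have Q0 : 0 <= lam / 2 * dotv ((u - v) *m A) ((u - v) *m A).
  by apply: mulr_ge0; [rewrite divr_ge0 // ltW | apply: dotv_ge0].
have hu := Fh_quadZ p (u - v) (1 - t); rewrite -eu in hu.
have hv := Fh_quadZ p (u - v) (- t); rewrite -ev in hv.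
rewrite hu hv.
set L := dotv _ _; set Q := _ * dotv _ _.
have e1 : (- t) ^+ 2 = t ^+ 2 by rewrite sqrrN.
rewrite e1 -/Q in Q0 *; have tt : 0 <= t * (1 - t) by nra.
have := mulr_ge0 tt Q0; clearbody L Q p; move=> h; nra.
Qed.

Lemma opnorm_bound d : dotv (d *m A) (d *m A) <= opnorm (A^T *m A) * dotv d d.
Proof.
set O := opnorm (A^T *m A).
set S := [set enorm (x *m (A^T *m A)) | x in [set x : 'rV[R]_n | enorm x <= 1]].
have [c [c0 hc]] := opbound (A^T *m A).
have hub : has_ubound S.
  exists c => _ [x hx <-]; apply: le_trans (hc x) _.
  by rewrite -[leRHS]mulr1; apply: ler_wpM2l.
have hS : forall x : 'rV[R]_n, enorm x <= 1 -> enorm (x *m (A^T *m A)) <= O.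
  by move=> x hx; apply: ub_le_sup => //; exists x.
have O0 : 0 <= O.
  have := hS 0; rewrite mul0mx enorm0 => h; apply: h; exact: ler01.
set u := d *m A.
have uu0 := dotv_ge0 u.
have dd0 := dotv_ge0 d.
case: (eqVneq (dotv u u) 0) => [->|unz]; first by apply: mulr_ge0.
have nu : 0 < enorm u by rewrite /enorm sqrtr_gt0 lt_neqAle eq_sym unz uu0.
have h1 : enorm (u *m (A^T *m A)) <= O * enorm u.
  have := hS ((enorm u)^-1 *: u).
  rewrite -scalemxAl !enormZ ger0_norm ?invr_ge0 ?enorm_ge0 // mulVf ?lt0r_neq0 //.
  move=> /(_ (lexx _)) h.
  by move: h; rewrite ler_pdivrMl // mulrC.
have h2 : dotv (u *m A^T) (u *m A^T) <= O * dotv u u.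
  rewrite -dotv_mulmx -mulmxA.
  apply: le_trans (CS _ _) _; rewrite -enorm_sq expr2 mulrA.
  by apply: ler_wpM2r; [apply: enorm_ge0 | exact: h1].
have h3 : dotv u u <= enorm d * enorm (u *m A^T).
  by rewrite {1}/u dotv_mulmx; apply: CS.
have ed := enorm_ge0 d; have eu := enorm_ge0 (u *m A^T).
move: h2 h3; rewrite -!enorm_sq => h2 h3.
have nu2 : 0 < enorm u ^+ 2 by rewrite exprn_gt0.
have h4 : enorm u ^+ 2 * enorm u ^+ 2 <= (enorm d * enorm (u *m A^T)) * (enorm d * enorm (u *m A^T)).
  by apply: ler_pM => //; apply: ltW.
have h5 : (enorm d * enorm (u *m A^T)) * (enorm d * enorm (u *m A^T)) <=
          enorm d ^+ 2 * (O * enorm u ^+ 2).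
  rewrite (_ : _ * _ = enorm d ^+ 2 * enorm (u *m A^T) ^+ 2); last by rewrite !expr2; ring.
  by apply: ler_wpM2l => //; apply: sqr_ge0.
rewrite -(ler_pM2r nu2); apply: le_trans h4 (le_trans h5 _).
by rewrite mulrCA mulrA.
Qed.

Lemma Fh_smooth : lip_smooth Fh (lam * opnorm (A^T *m A)).
Proof.
split; first exact: Fh_DF.
move=> u w0; rewrite Fh_diff.
set d := u - w0.
have -> : Fh u = Fh (w0 + d) by rewrite /d addrC subrK.
rewrite Fh_quad.
have := opnorm_bound d; rewrite -enorm_sq => h.
have e : forall a b c : R, a + b + c - a - b = c by move=> *; ring.
rewrite e.
apply: (le_trans (ler_wpM2l _ h)); first by rewrite divr_ge0 // ltW.
have -> : lam / 2 * (opnorm (A^T *m A) * dotv d d) = lam * opnorm (A^T *m A) / 2 * dotv d d by ring.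
by rewrite enorm_sq.
Qed.

End FH.

Lemma enorm_row_mx0 (R : realType) n (a : 'rV[R]_n) :
  enorm (row_mx a (0 : 'rV[R]_1)) = enorm a.
Proof.
rewrite /enorm /dotv; congr Num.sqrt.
rewrite big_split_ord /= [X in _ + X]big1 ?addr0.
  by apply: eq_bigr => i _; rewrite row_mxEl.
by move=> j _; rewrite row_mxEr mxE mul0r.
Qed.

Lemma sq_div_le (R : realType) (D E th : R) : 0 < th -> 0 <= D -> D <= th * E ->
  D ^+ 2 / th ^+ 2 <= E ^+ 2.
Proof.
move=> t0 D0 h; rewrite ler_pdivrMr ?exprn_gt0 //.
have : 0 <= th * E by lra.
move=> h2; nra.
Qed.

Section Final.
Variable R : realType.
Variables N m n : nat.
Variable w : 'I_N -> 'rV[R]_m.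
Variable A : 'M[R]_(m, n).
Hypothesis HN : (0 < N)%N.

Local Notation Psi lam y := (Psilam w A lam y).

Lemma Psi_inC lam y v : inC w v -> Psi lam y v = (Fh A lam y v)%:E.
Proof. by move=> h; rewrite /Psilam fconj_inC // adde0. Qed.

Lemma Psi_fin lam y v : (Psi lam y v < +oo)%E -> inC w v.
Proof.
move=> h; apply: (sep HN); move: h; rewrite /Psilam.
by case: (fconj (omega w) v) => // r _; rewrite ltey.
Qed.

Lemma Psi_ge lam y v (c : R) : (forall u, inC w u -> c <= Fh A lam y u) -> (c%:E <= Psi lam y v)%E.
Proof.
move=> hc; case: (boolp.pselect (Psi lam y v < +oo)%E) => h.
  by rewrite Psi_inC ?lee_fin; [apply: hc; apply: Psi_fin h | apply: Psi_fin h].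
have -> : Psi lam y v = +oo%E.
  by apply/eqP; rewrite eq_le leey /= leNgt; apply/negP.
exact: leey.
Qed.

Lemma Fh_alt lam y v : 0 < lam -> Fh A lam y v =
  (2 * lam)^-1 * dotv (v *m (lam *: A) + (- y)) (v *m (lam *: A) + (- y)) - (2 * lam)^-1 * enorm y ^+ 2.
Proof. by move=> _; rewrite /Fh /hlam /Atv !enorm_sq scalemxAr. Qed.

Lemma argmin_ex lam y : 0 < lam -> exists p, inC w p /\ argmin (Psi lam y) p.
Proof.
move=> lam0.
have [p [hp hmin]] := exists_minC w HN (- y) (lam *: A).
exists p; split => // v; rewrite Psi_inC //; apply: Psi_ge => u hu.
rewrite !Fh_alt // lerD2r; apply: ler_wpM2l; first by rewrite invr_ge0 mulr_ge0 // ltW.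
exact: hmin.
Qed.

Definition Mh : 'M[R]_(N, n + 1) := row_mx (Wm w *m A) (const_mx 1).

Lemma QG lam y (lam0 : 0 < lam) K (K0 : 0 <= K)
  (hK : forall d : 'rV[R]_N, exists e : 'rV[R]_N,
     [/\ betw (fun i => e 0 i) (fun i => d 0 i), e *m Mh = d *m Mh & enorm e <= K * enorm (d *m Mh)])
  cW (cW0 : 0 <= cW) (hcW : forall l : 'rV[R]_N, enorm (l *m Wm w) <= cW * enorm l) :
  quad_growth (Psi lam y) (lam / (cW * K + 1) ^+ 2).
Proof.
have [p0 [hp0 hmin0]] := argmin_ex y lam0.
split; first by exists p0.
move=> v s hs.
set th := cW * K + 1.
have th0 : 0 < th by rewrite /th; have := mulr_ge0 cW0 K0; lra.
have hsC : inC w s.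
  apply: (Psi_fin (lam := lam) (y := y)); apply: le_lt_trans (hs p0) _.
  by rewrite Psi_inC // ltey.
case: (boolp.pselect (Psi lam y v < +oo)%E) => hv; last first.
  have -> : Psi lam y v = +oo%E.
    by apply/eqP; rewrite eq_le leey /= leNgt; apply/negP.
  exact: leey.
have hvC := Psi_fin hv.
rewrite !Psi_inC // -EFinD lee_fin.
set Q := dotv ((v - s) *m A) ((v - s) *m A).
have Q0 : 0 <= Q by apply: dotv_ge0.
set L := dotv (lam *: (s *m A) - y) ((v - s) *m A).
have hL : - L <= 0.
  apply: (@small_le0 _ _ (lam / 2 * Q)); first by rewrite mulr_ge0 // divr_ge0 // ltW.
  move=> t t0 t1.
  have hpt : inC w (s + t *: (v - s)).
    have := inC_conv hvC hsC (ltW t0) t1.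
    have -> : t *: v + (1 - t) *: s = s + t *: (v - s) by apply/rowP => i; rewrite !mxE; ring.
    by [].
  have := hs (s + t *: (v - s)); rewrite !Psi_inC // lee_fin (Fh_quadZ _ _ lam0) -/L -/Q.
  move=> h; nra.
have hFv : Fh A lam y s + lam / 2 * Q <= Fh A lam y v.
  have := Fh_quad A y lam0 s (v - s); rewrite addrC subrK -/L -/Q => ->; lra.
case: hvC => l [[hl1 hl2] ev]; case: hsC => l0 [[hl01 hl02] es].
set d := l0 - l.
have [e [e1 e2 e3]] := hK d.
move: e2; rewrite /Mh !mul_mx_row => /eq_row_mx [eB eC].
have sumd : \sum_(i < N) d 0 i = 0.
  rewrite (eq_bigr (fun i => l0 0 i - l 0 i)); last by move=> i _; rewrite !mxE.
  by rewrite sumrB hl02 hl2 subrr.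
have dC : d *m const_mx 1 = 0 :> 'rV[R]_1.
  apply/rowP => i; rewrite !mxE -[RHS]sumd; apply: eq_bigr => j _; by rewrite [const_mx _ _ _]mxE mulr1.
have sume : \sum_(i < N) e 0 i = 0.
  have := congr1 (fun M : 'rV[R]_1 => M 0 0) eC; rewrite dC /= !mxE => h.
  rewrite -[RHS]h; apply: eq_bigr => j _; by rewrite [const_mx _ _ _]mxE mulr1.
set mu := l + e.
have hmu : simplex mu.
  split.
    move=> i; rewrite mxE; have /betw1P := e1 i; have := hl01 i; have := hl1 i.
    rewrite /d !mxE => h1 h2 [[h3 [h4 h5]]|[h3 [h4 h5]]]; lra.
  rewrite (eq_bigr (fun i => l 0 i + e 0 i)); last by move=> i _; rewrite !mxE.
  by rewrite big_split /= hl2 sume addr0.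
set s' := mu *m Wm w.
have s'A : s' *m A = s *m A.
  rewrite /s' /mu es mulmxDl mulmxDl -!mulmxA eB /d !mulmxA mulmxBl mulmxBl.
  by rewrite addrC subrK.
have Fs' : Fh A lam y s' = Fh A lam y s by rewrite /Fh /Atv s'A.
have hs' : argmin (Psi lam y) s'.
  move=> u; rewrite Psi_inC; last by exists mu.
  apply: (le_trans _ (hs u)); rewrite [Psi lam y s]Psi_inC; last by exists l0.
  by rewrite Fs'.
set D := distset v (argmin (Psi lam y)).
have hlb : has_lbound [set enorm (v - x) | x in argmin (Psi lam y)].
  by exists 0 => _ [x _ <-]; apply: enorm_ge0.
have D0 : 0 <= D.
  apply: lb_le_inf; first by exists (enorm (v - s)); exists s.
  by move=> _ [x _ <-]; apply: enorm_ge0.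
have hD : D <= enorm (v - s') by apply: ge_inf => //; exists s'.
set E := enorm ((v - s) *m A).
have E0 : 0 <= E by apply: enorm_ge0.
have hE : D <= th * E.
  apply: (le_trans hD).
  have -> : v - s' = - (e *m Wm w).
    by rewrite /s' /mu ev mulmxDl opprD addrA subrr add0r.
  rewrite enormN; apply: (le_trans (hcW e)).
  have : enorm (d *m Mh) = E.
    rewrite /Mh mul_mx_row dC enorm_row_mx0 mulmxA /d mulmxBl -es -ev /E.
    by rewrite -(opprB v s) mulNmx enormN.
  move=> hdE; rewrite hdE in e3.
  have := ler_wpM2l cW0 e3; rewrite /th => h; nra.
have QE : Q = E ^+ 2 by rewrite /E enorm_sq.
have hD2 : D ^+ 2 / th ^+ 2 <= E ^+ 2.
  exact: sq_div_le.
have -> : lam / th ^+ 2 / 2 * D ^+ 2 = lam / 2 * (D ^+ 2 / th ^+ 2).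
  by field; apply: lt0r_neq0.
apply: le_trans hFv; rewrite lerD2l QE; apply: ler_wpM2l => //.
by rewrite divr_ge0 // ltW.
Qed.

End Final.

Unset Implicit Arguments.

Theorem theorem7p6 (R : realType) (N m n : nat) (w : 'I_N -> 'rV[R]_m)
  (A : 'M[R]_(m, n)) (HN : (0 < N)%N) :
  (* (i) *)
  ((forall z z' : 'rV[R]_m,
      `|omega w z - omega w z'| <=
        (\big[Num.max/0]_(i < N) enorm (w i)) * enorm (z - z')) /\
   ebounded_set (edom (fconj (omega w)))) /\
  (exists theta : R, 0 < theta /\
    (* (ii) *)
    (forall (lam : R) (y : 'rV[R]_n), 0 < lam ->
       convex_fun (fun v => hlam lam y (Atv A v)) /\
       lip_smooth (fun v => hlam lam y (Atv A v)) (lam * opnorm (A^T *m A)) /\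
       (argmin (Psilam w A lam y) !=set0) /\
       quad_growth (Psilam w A lam y) (lam / theta ^+ 2)) /\
    (* (iii) *)
    (forall lam lammin : R, 0 < lammin -> lammin <= lam ->
       lammin / theta ^+ 2 <= lam / theta ^+ 2)).
Proof.
split.
  split; first exact: (omega_lip w HN).
  by exists (Kw w) => v hv; exact: (fconj_bounded HN hv).
have [K [K0 hK]] := hoffman (Mh w A).
have [cW [cW0 hcW]] := opbound (Wm w).
have th0 : 0 < cW * K + 1 by have := mulr_ge0 cW0 K0; lra.
exists (cW * K + 1); split => //; split.
  move=> lam y lam0; split; first exact: (Fh_convex A y lam0).
  split; first exact: (Fh_smooth A y lam0).
  have hq := QG HN y lam0 K0 hK cW0 hcW.
  by split; [exact: hq.1 | exact: hq].
move=> lam lammin h0 h1; apply: ler_wpM2r => //.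
by rewrite invr_ge0 exprn_ge0 // ltW.
Qed.
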